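(* Let $a_1,\dots,a_n\in S^d$, and run Algorithm 2.9 (described in the context). Then $\mathrm{def}\,Q_k\le t^{-1}$ after at most $t^2$ steps. That is, for every real $t\ge1$ and every index $k\ge t^2$ for which $Q_k$ is produced, $\mathrm{def}\,Q_k\le 1/t$.
   Context: $S^d$ is the unit sphere in $\mathbb{R}^{d+1}$ and $O$ is the origin. An index $m$ is a most violated constraint for $x\in S^d$ if $a_m^Tx=\min_j a_j^Tx$. A finite set $Q$ is positively spanning if it is affinely independent and $O\in\mathrm{conv}\,Q$. For affinely independent $Q$ whose projection $O'$ of $O$ onto $\mathrm{aff}\,Q$ lies in $\mathrm{conv}\,Q$, $\mathrm{def}\,Q=\|O'\|$. The touching sphere of an affinely independent $Q$ is the unique sphere $\{z:\|z-C\|=R\}$ with $C\in\mathrm{aff}\,Q$ containing $Q$. Algorithm 2.9: (1) Choose any $j$ and set $k=1$, $x^1=a_j$, $Q_1=\{a_j\}$. (2) If $a_i^Tx^k\ge0$ for all $i$, stop. Otherwise let $m$ be a most violated constraint for $x^k/\|x^k\|$, and let $y$ be the point on the line through $x^k$ and $a_m$ closest to the origin. (3) If $Q_k\cup\{a_m\}$ is positively spanning, stop. (4) Compute the center $C$ of the touching sphere of $Q_k\cup\{a_m\}$. (5) If $C\in\mathrm{conv}(Q_k\cup\{a_m\})$, set $x^{k+1}=C$, $Q_{k+1}=Q_k\cup\{a_m\}$ and $k:=k+1$, then go to (2). (6) Otherwise, let $y$ be the point where $\overline{yC}$ meets the relative boundary of $\mathrm{conv}(Q_k\cup\{a_m\})$.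 Let $F$ be a facet containing $y$, and let $a_j$ be the vertex of $Q_k$ not in $F$. Set $Q_k:=Q_k\setminus\{a_j\}$ and go to (4). *)

(* Defs.v *)
From HB Require Import structures.
From mathcomp Require Import all_boot all_order all_algebra.
From mathcomp Require Import reals.
Set Implicit Arguments.
Unset Strict Implicit.
Unset Printing Implicit Defensive.
Import Order.TTheory GRing.Theory Num.Theory.
Local Open Scope ring_scope.

Section Defs.
Variable R : realType.
Variable d n : nat.
Notation vec := 'rV[R]_(d.+1).

Definition dot (u v : vec) : R := \sum_(i < d.+1) u 0 i * v 0 i.
Definition norm (u : vec) : R := Num.sqrt (dot u u).

(* The constraint vectors a_1..a_n are a family a : 'I_n -> vec; a subset Q of
   {a_i} is represented by a set of indices S : {set 'I_n}. *)
Variable a : 'I_n -> vec.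

Definition in_aff (S : {set 'I_n}) (x : vec) : Prop :=
  exists c : 'I_n -> R, (forall i, i \notin S -> c i = 0) /\
    \sum_i c i = 1 /\ x = \sum_i c i *: a i.

Definition in_conv (S : {set 'I_n}) (x : vec) : Prop :=
  exists c : 'I_n -> R, (forall i, i \notin S -> c i = 0) /\
    (forall i, 0 <= c i) /\ \sum_i c i = 1 /\ x = \sum_i c i *: a i.

Definition aff_indep (S : {set 'I_n}) : Prop :=
  forall c : 'I_n -> R, (forall i, i \notin S -> c i = 0) ->
    \sum_i c i = 0 -> \sum_i c i *: a i = 0 -> forall i, c i = 0.

Definition pos_spanning (S : {set 'I_n}) : Prop :=
  aff_indep S /\ in_conv S 0.

(* relative interior / relative boundary of conv Q (conv Q is closed) *)
Definition in_relint (S : {set 'I_n}) (x : vec) : Prop :=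
  in_conv S x /\ exists e : R, 0 < e /\
    forall z, in_aff S z -> norm (z - x) < e -> in_conv S z.

Definition in_relbd (S : {set 'I_n}) (x : vec) : Prop :=
  in_conv S x /\ ~ in_relint S x.

Definition touch_center (S : {set 'I_n}) (C : vec) : Prop :=
  aff_indep S /\ in_aff S C /\
  exists r : R, forall i, i \in S -> norm (a i - C) = r.

Definition proj_origin (S : {set 'I_n}) (p : vec) : Prop :=
  in_aff S p /\ forall z, in_aff S z -> norm p <= norm z.

(* def Q = r : defined when O' lies in conv Q, and then equals ||O'|| *)
Definition defect (S : {set 'I_n}) (r : R) : Prop :=
  exists p, proj_origin S p /\ in_conv S p /\ r = norm p.

Definition most_violated (m : 'I_n) (u : vec) : Prop :=
  forall j, dot (a m) u <= dot (a j) u.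

Definition closest_on_line (x b y : vec) : Prop :=
  (exists s : R, y = x + s *: (b - x)) /\
  forall s : R, norm y <= norm (x + s *: (b - x)).

Definition exit_point (S : {set 'I_n}) (y C y' : vec) : Prop :=
  (exists s : R, 0 <= s <= 1 /\ y' = y + s *: (C - y) /\
     forall s' : R, s < s' <= 1 -> ~ in_conv S (y + s' *: (C - y))) /\
  in_relbd S y'.

(* The inner loop (4)-(6) with the new constraint m: from the current Q_k
   (index set S) and current point y, it ends at step (5) with
   Q_{k+1} = S' and x^{k+1} = x'. *)
Inductive inner_loop (m : 'I_n) : {set 'I_n} -> vec -> {set 'I_n} -> vec -> Prop :=
| inner_done S y C :
    touch_center (m |: S) C -> in_conv (m |: S) C ->
    inner_loop m S y (m |: S) C
| inner_drop S y C y' j S' x' :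
    touch_center (m |: S) C -> ~ in_conv (m |: S) C ->
    exit_point (m |: S) y C y' ->
    (* F = conv((Q_k u {a_m}) \ {a_j}) is a facet containing y', a_j in Q_k *)
    j \in S -> in_conv ((m |: S) :\ j) y' ->
    inner_loop m (S :\ j) y' S' x' ->
    inner_loop m S y S' x'.

(* One full iteration of the algorithm from (Q_k, x^k) to (Q_{k+1}, x^{k+1})
   in which the algorithm does not stop. *)
Definition alg_step (S : {set 'I_n}) (x : vec) (S' : {set 'I_n}) (x' : vec)
  : Prop :=
  (exists i, dot (a i) x < 0) /\
  exists m y, most_violated m ((norm x)^-1 *: x) /\
    closest_on_line x (a m) y /\
    ~ pos_spanning (m |: S) /\
    inner_loop m S y S' x'.

Definition alg_run (K : nat) (Qs : nat -> {set 'I_n}) (xs : nat -> vec)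
  : Prop :=
  exists j, Qs 1%N = [set j] /\ xs 1%N = a j /\
    forall k, (1 <= k < K)%N -> alg_step (Qs k) (xs k) (Qs k.+1) (xs k.+1).

End Defs.

(* Main.v *)
Require Import Defs.
From HB Require Import structures.
From mathcomp Require Import all_boot all_order all_algebra.
From mathcomp Require Import reals.
From mathcomp Require Import ring lra.
Import Order.TTheory GRing.Theory Num.Theory.
Local Open Scope ring_scope.

Section Aux.
Variables (R : realType) (d n : nat) (a : 'I_n -> 'rV[R]_(d.+1)).
Hypothesis ha : forall i, norm (a i) = 1.
Local Notation vec := 'rV[R]_(d.+1).

Lemma dotC (u v : vec) : dot u v = dot v u.
Proof. by rewrite /dot; apply: eq_bigr => i _; rewrite mulrC. Qed.
Lemma dotDl (u v w : vec) : dot (u + v) w = dot u w + dot v w.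
Proof. by rewrite /dot -big_split; apply: eq_bigr => i _; rewrite mxE mulrDl. Qed.
Lemma dotZl c (u v : vec) : dot (c *: u) v = c * dot u v.
Proof. by rewrite /dot mulr_sumr; apply: eq_bigr => i _; rewrite mxE mulrA. Qed.
Lemma dotNl (u v : vec) : dot (- u) v = - dot u v.
Proof. by rewrite /dot -sumrN; apply: eq_bigr => i _; rewrite mxE mulNr. Qed.
Lemma dotBl (u v w : vec) : dot (u - v) w = dot u w - dot v w.
Proof. by rewrite dotDl dotNl. Qed.
Lemma dotDr (u v w : vec) : dot w (u + v) = dot w u + dot w v.
Proof. by rewrite dotC dotDl !(dotC w). Qed.
Lemma dotZr c (u v : vec) : dot v (c *: u) = c * dot v u.
Proof. by rewrite dotC dotZl dotC. Qed.
Lemma dotBr (u v w : vec) : dot w (u - v) = dot w u - dot w v.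
Proof. by rewrite dotC dotBl !(dotC w). Qed.
Lemma dotNr (u v : vec) : dot v (- u) = - dot v u.
Proof. by rewrite dotC dotNl dotC. Qed.
Lemma dot_ge0 (u : vec) : 0 <= dot u u.
Proof. by apply: sumr_ge0 => i _; rewrite -expr2 sqr_ge0. Qed.
Lemma dot_suml (F : 'I_n -> vec) v : dot (\sum_j F j) v = \sum_j dot (F j) v.
Proof.
rewrite /dot; under eq_bigr do rewrite summxE mulr_suml.
by rewrite exchange_big.
Qed.
Lemma dot_aa i : dot (a i) (a i) = 1.
Proof.
have := ha i; rewrite /norm => h.
by rewrite -[dot _ _]sqr_sqrtr ?dot_ge0 // h expr1n.
Qed.

Lemma dot_line (x b : vec) s : dot (x + s *: (b - x)) (x + s *: (b - x)) =
  dot x x + 2 * s * (dot x b - dot x x) + s ^+ 2 * (dot b b - 2 * dot x b + dot x x).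
Proof.
rewrite !(dotDl, dotDr, dotZl, dotZr, dotBl, dotBr, dotNl, dotNr) (dotC b x); ring.
Qed.

Lemma touch_min (S : {set 'I_n}) C : touch_center a S C ->
  forall z, in_aff a S z -> dot C C <= dot z z.
Proof.
case=> _ [[g [g0 [g1 eC]]] [r hr]] z [c [c0 [c1 ez]]].
pose k := (1 + dot C C - r ^+ 2) / 2.
have key : forall i, i \in S -> dot (a i) C = k.
  move=> i iS; have := hr i iS; rewrite /norm => h.
  have : dot (a i - C) (a i - C) = r ^+ 2 by rewrite -h sqr_sqrtr // dot_ge0.
  rewrite dotBl !dotBr dot_aa (dotC C (a i)) /k => e; lra.
have hg : forall f : 'I_n -> R, (forall i, i \notin S -> f i = 0) ->
    forall i, f i * dot (a i) C = f i * k.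
  move=> f f0 i; case: (boolP (i \in S)) => iS; first by rewrite key.
  by rewrite f0 // !mul0r.
have hCC : dot C C = k.
  rewrite {1}eC dot_suml; under eq_bigr do rewrite dotZl (hg g g0).
  by rewrite -mulr_suml g1 mul1r.
have hzC : dot z C = k.
  rewrite ez dot_suml; under eq_bigr do rewrite dotZl (hg c c0).
  by rewrite -mulr_suml c1 mul1r.
have := dot_ge0 (z - C).
rewrite !(dotBl, dotBr) (dotC C z) hzC hCC; lra.
Qed.

Lemma conv_aff (S : {set 'I_n}) x : in_conv a S x -> in_aff a S x.
Proof. by case=> c [h0 [_ [h1 h2]]]; exists c. Qed.

Lemma aff_sub (S T : {set 'I_n}) x : S \subset T -> in_aff a S x -> in_aff a T x.
Proof.
move=> sST [c [h0 h]]; exists c; split=> // i iT; apply: h0.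
by apply: contra iT; exact: (subsetP sST).
Qed.

Lemma aff_comb (S : {set 'I_n}) x y s : in_aff a S x -> in_aff a S y ->
  in_aff a S (x + s *: (y - x)).
Proof.
case=> c [c0 [c1 ex]] [e [e0 [e1 ey]]].
exists (fun i => c i + s * (e i - c i)); split.
  by move=> i iS; rewrite c0 ?e0 // subrr mulr0 addr0.
split.
  by rewrite big_split /= -mulr_sumr sumrB c1 e1 subrr mulr0 addr0.
rewrite ex ey -sumrB scaler_sumr -big_split; apply: eq_bigr => i _ /=.
by rewrite scalerDl -scalerA scalerBl.
Qed.

Lemma aff_single m : in_aff a [set m] (a m).
Proof.
exists (fun i => (i == m)%:R); split.
  by move=> i; rewrite inE => /negbTE ->.
split.
  by rewrite (bigD1 m) //= eqxx big1 ?addr0 // => i /negbTE ->.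
rewrite (bigD1 m) //= eqxx scale1r big1 ?addr0 // => i /negbTE ->.
by rewrite scale0r.
Qed.

Arguments touch_min [S C].
Arguments conv_aff [S x].
Arguments aff_sub [S T x].
Arguments aff_comb [S x y s].

Lemma seg_le (y C : vec) s : 0 <= s <= 1 -> dot C C <= dot y y ->
  dot (y + s *: (C - y)) (y + s *: (C - y)) <= dot y y.
Proof.
move=> /andP[s0 s1] hC; rewrite dot_line.
have h1 := dot_ge0 (y - C).
rewrite !(dotBl, dotBr) (dotC C y) in h1.
have h2 : 0 <= s * (1 - s) by apply: mulr_ge0; lra.
nra.
Qed.

Lemma inner_inv m S y S' x' : inner_loop a m S y S' x' -> in_aff a (m |: S) y ->
  in_conv a S' x' /\ (forall z, in_aff a S' z -> dot x' x' <= dot z z) /\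
  dot x' x' <= dot y y.
Proof.
elim=> {S y S' x'} [S y C tc cv | S y C y' j S' x' tc ncv ex jS cvy' _ IH] hy.
  by split=> //; split; [exact: touch_min tc | exact: touch_min tc _ hy].
have hCy := touch_min tc _ hy.
case: ex => [[s [s01 [ey' _]]] _].
have hy'aff : in_aff a (m |: (S :\ j)) y'.
  apply: aff_sub (conv_aff cvy').
  apply/subsetP => i; rewrite !inE; case/andP=> ij /orP [->//| iS].
  by rewrite ij iS orbT.
have [h1 [h2 h3]] := IH hy'aff.
split=> //; split=> //; apply: le_trans h3 _.
by rewrite ey'; exact: seg_le.
Qed.

Arguments inner_inv [m S y S' x'].

Lemma step_inv (S : {set 'I_n}) x S' x' : in_aff a S x -> alg_step a S x S' x' ->
  in_conv a S' x' /\ (forall z, in_aff a S' z -> dot x' x' <= dot z z) /\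
  dot x' x' <= dot x x / (1 + dot x x).
Proof.
move=> ax [[i hi] [m [y [mv [[[s0 ey] hmin] [_ il]]]]]].
have hxx : 0 < dot x x.
  rewrite lt_neqAle dot_ge0 andbT eq_sym; apply/negP => /eqP h0.
  have hl : forall l, true -> x 0 l * x 0 l = 0.
    by apply: psumr_eq0P h0 => l _; rewrite -expr2 sqr_ge0.
  move: hi; rewrite /dot big1 ?ltxx // => l _.
  have := hl l isT; rewrite -expr2 => /eqP; rewrite sqrf_eq0 => /eqP ->.
  by rewrite mulr0.
have nx : 0 < (norm x)^-1 by rewrite invr_gt0 /norm sqrtr_gt0.
have hm : dot (a m) x < 0.
  by move: (mv i); rewrite !dotZr ler_pM2l // => h; exact: le_lt_trans h hi.
have hyaff : in_aff a (m |: S) y.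
  rewrite ey; apply: aff_comb.
    by apply: aff_sub ax; exact: subsetUr.
  by apply: aff_sub (aff_single m); exact: subsetUl.
set u := dot x x.
have hyb : dot y y <= u / (1 + u).
  pose s := u / (1 + u).
  have := hmin s; rewrite /norm ler_sqrt ?dot_ge0 // dot_line dot_aa.
  have hu1 : 0 < 1 + u by rewrite -/u in hxx; lra.
  have e1 : s * (1 + u) = u by rewrite /s mulrVK // unitfE gt_eqF.
  have e2 : s * s * (1 + u) = s * u by rewrite -mulrA e1.
  have s01 : 0 <= s <= 1.
    rewrite /s divr_ge0 ?ler_pdivrMr //=; try lra; exact: ltW.
  case/andP: s01 => s0' s1'.
  have h3 : 0 <= s * (1 - s) by apply: mulr_ge0; lra.
  have h4 : dot x (a m) * (s * (1 - s)) <= 0 by rewrite dotC; nra.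
  rewrite -/s -/u => h; apply: le_trans h _.
  nra.
have [h1 [h2 h3]] := inner_inv il hyaff.
by split=> //; split=> //; apply: le_trans h3 hyb.
Qed.

Arguments step_inv [S x S' x'].

Lemma main_aux (K : nat) (Qs : nat -> {set 'I_n}) (xs : nat -> 'rV[R]_(d.+1))
  (hrun : alg_run a K Qs xs)
  (t : R) (k : nat) (ht : 1 <= t) (hk : (1 <= k <= K)%N) (hkt : t ^+ 2 <= k%:R) :
  exists r : R, defect a (Qs k) r /\ r <= t^-1.
Proof.
case: hrun => j [Q1 [x1 hstep]].
have inv : forall k, (1 <= k <= K)%N -> in_conv a (Qs k) (xs k) /\
    (forall z, in_aff a (Qs k) z -> dot (xs k) (xs k) <= dot z z) /\
    dot (xs k) (xs k) * k%:R <= 1.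
  elim=> [//|k' IH] /andP[_ hk'].
  case: k' IH hk' => [|k' IH hk'].
    move=> _ _; rewrite Q1 x1; split; last split; last by rewrite dot_aa mulr1.
      exists (fun i => (i == j)%:R); split.
        by move=> i; rewrite inE => /negbTE ->.
      split; first by move=> i; case: (i == j).
      split; first by rewrite (bigD1 j) //= eqxx big1 ?addr0 // => i /negbTE ->.
      rewrite (bigD1 j) //= eqxx scale1r big1 ?addr0 // => i /negbTE ->.
      by rewrite scale0r.
    move=> z [c [c0 [c1 ->]]].
    have cE : forall i, c i = (i == j)%:R * c j.
      move=> i; case: eqP => [->|/eqP ij]; first by rewrite mul1r.
      by rewrite c0 ?mul0r // inE.
    have cj : c j = 1.
      by rewrite -c1 (bigD1 j) //= big1 ?addr0 // => i ij; rewrite cE (negbTE ij) mul0r.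
    rewrite (bigD1 j) //= big1 ?addr0 ?cj ?scale1r //.
    by move=> i ij; rewrite cE (negbTE ij) mul0r scale0r.
  have [c1 [c2 c3]] := IH (ltnW hk').
  have [d1 [d2 d3]] := step_inv (conv_aff c1) (hstep k'.+1 hk').
  split=> //; split=> //.
  set u := dot (xs k'.+1) (xs k'.+1) in c3 d3 *.
  have u0 : 0 <= u := dot_ge0 _.
  have v0 : 0 <= dot (xs k'.+2) (xs k'.+2) := dot_ge0 _.
  have hu : u / (1 + u) * k'.+2%:R <= 1.
    rewrite mulrAC ler_pdivrMr ?mul1r; last by lra.
    by rewrite -(addn1 k'.+1) natrD; lra.
  apply: le_trans hu; apply: ler_wpM2r => //.
have [c1 [c2 c3]] := inv k hk.
exists (norm (xs k)); split.
  exists (xs k); split; last by split.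
  split; first exact: conv_aff.
  by move=> z hz; rewrite /norm ler_sqrt ?dot_ge0 //; apply: c2.
set u := dot (xs k) (xs k) in c3 *.
have u0 : 0 <= u := dot_ge0 _.
have hq := sqr_sqrtr u0.
have q0 : 0 <= norm (xs k) by rewrite /norm sqrtr_ge0.
rewrite /norm -/u in q0 *.
set q := Num.sqrt u in hq q0 *.
have t0 : 0 < t by lra.
have tt : t * t^-1 = 1 by rewrite divff // gt_eqF.
have ut : u * t ^+ 2 <= 1 by nra.
rewrite -hq expr2 in ut.
have qt : q * t <= 1 by nra.
nra.
Qed.

End Aux.


Theorem lemma2p11 (R : realType) (d n : nat) (a : 'I_n -> 'rV[R]_(d.+1))
  (ha : forall i, norm (a i) = 1)
  (K : nat) (Qs : nat -> {set 'I_n}) (xs : nat -> 'rV[R]_(d.+1))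
  (hrun : alg_run a K Qs xs)
  (t : R) (k : nat) (ht : 1 <= t) (hk : (1 <= k <= K)%N) (hkt : t ^+ 2 <= k%:R) :
  exists r : R, defect a (Qs k) r /\ r <= t^-1.
Proof. exact: (@main_aux R d n a ha K Qs xs hrun t k ht hk hkt). Qed.
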